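(* Let $T$ be a tree. If $f(X)$ is a nonzero minor of $L(T,X)$ (the determinant of a square submatrix $L(T,X)[I,J]$ with $|I|=|J|\geq1$) whose leading coefficient is positive, then there exists a $2$-matching $\mathcal{M}$ of $T^\ell$ such that $f(X)=d(\mathcal{M},X)$.
   Context: A tree is a simple connected graph without cycles. $L(T,X)$ is the matrix indexed by $V(T)$ with diagonal entries $x_u$ and off-diagonal entry $-1$ for adjacent vertices and $0$ otherwise. Leading coefficients are taken with respect to the degree lexicographic monomial order. A $2$-matching of a graph (loops allowed) is a set $\mathcal{M}$ of edges such that every vertex is incident to at most two edges of $\mathcal{M}$ (a loop counts twice for incidence but as one edge). $T^\ell$ is $T$ with a loop added at each vertex. Components of $\mathcal{M}$ are single loops or paths of $T$; orient each path $w_1\cdots w_{m+1}$ (either direction), with heads $\{w_2,\dots,w_{m+1}\}$ and tails $\{w_1,\dots,w_m\}$, a loop $uu$ having head and tail $u$; $h(\mathcal{M})$, $t(\mathcal{M})$ are the unions of heads, resp. tails. $d(\mathcal{M},X)=\pm\det L(T,X)[h(\mathcal{M}),t(\mathcal{M})]$, the sign chosen so that the leading coefficient is positive. *)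

(* Defs.v *)
From mathcomp Require Import all_boot all_order all_algebra.
From mathcomp Require Import mpoly.
Set Implicit Arguments. Unset Strict Implicit. Unset Printing Implicit Defensive.
Import Order.TTheory GRing.Theory Num.Theory.
Local Open Scope ring_scope.

Definition is_tree (n : nat) (e : rel 'I_n) : Prop :=
  [/\ (forall u v : 'I_n, e u v = e v u), (forall u : 'I_n, ~~ e u u),
      (forall u v : 'I_n, connect e u v) &
      (forall s : seq 'I_n, uniq s -> (2 < size s)%N -> ~~ cycle e s)].

Definition Lmx (n : nat) (e : rel 'I_n) : 'M[{mpoly int[n]}]_n :=
  \matrix_(u, v) (if u == v then 'X_u else if e u v then -1 else 0).

Definition subm (n k : nat) (A : 'M[{mpoly int[n]}]_n) (r c : 'I_k -> 'I_n)
  : 'M[{mpoly int[n]}]_k := \matrix_(a, b) A (r a) (c b).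

Definition increasing (n k : nat) (r : 'I_k -> 'I_n) : Prop :=
  forall a b : 'I_k, (a < b)%N -> (r a < r b)%N.

Definition is_minor (n : nat) (e : rel 'I_n) (f : {mpoly int[n]}) : Prop :=
  exists (k : nat) (r c : 'I_k -> 'I_n),
    [/\ (0 < k)%N, increasing r, increasing c & f = \det (subm (Lmx e) r c)].

(* Edges of T^l are represented as sets: a loop uu is [set u], an edge uv of T
   is [set u; v]. *)
Definition two_matching (n : nat) (e : rel 'I_n) (M : {set {set 'I_n}}) : Prop :=
  (forall E, E \in M ->
     (exists u, E = [set u]) \/ (exists u v, e u v /\ E = [set u; v])) /\
  (forall w : 'I_n,
     (#|[set E in M | (w \in E) && (#|E| == 2)]| + 2 * ([set w] \in M) <= 2)%N).

Definition is_orientation (n : nat) (M : {set {set 'I_n}})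
    (D : {set 'I_n * 'I_n}) : Prop :=
  [/\ (forall u v, (u, v) \in D -> [set u; v] \in M),
      (forall E, E \in M -> exists u v, (u, v) \in D /\ E = [set u; v]),
      (forall u v, (u, v) \in D -> (v, u) \in D -> u = v),
      (forall u, (#|[set v | (u, v) \in D]| <= 1)%N) &
      (forall v, (#|[set u | (u, v) \in D]| <= 1)%N)].

Definition heads (n : nat) (D : {set 'I_n * 'I_n}) : {set 'I_n} :=
  [set v | [exists u, (u, v) \in D]].
Definition tails (n : nat) (D : {set 'I_n * 'I_n}) : {set 'I_n} :=
  [set u | [exists v, (u, v) \in D]].

(* f = d(M,X) for the orientation D: f = +- det L[h(M), t(M)], with the sign
   such that the leading coefficient (degree-lexicographic order, mleadc) is
   positive. *)
Definition is_d (n : nat) (e : rel 'I_n) (D : {set 'I_n * 'I_n})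
    (f : {mpoly int[n]}) : Prop :=
  exists (k : nat) (r c : 'I_k -> 'I_n),
    [/\ increasing r, increasing c,
        (forall u, (u \in heads D) = (u \in codom r)),
        (forall u, (u \in tails D) = (u \in codom c)) &
        [/\ f = \det (subm (Lmx e) r c) \/ f = - \det (subm (Lmx e) r c)
          & 0 < mleadc f]].

(* Main.v *)
Require Import Defs.
From mathcomp Require Import all_boot all_order all_algebra.
From mathcomp Require Import fingroup perm.
From mathcomp Require Import zify.
From mathcomp Require Import mpoly.
Set Implicit Arguments. Unset Strict Implicit. Unset Printing Implicit Defensive.
Import Order.TTheory GRing.Theory Num.Theory.
Local Open Scope ring_scope.

Definition pm (R : zmodType) (x y : R) := x = y \/ x = - y.

Lemma pm_refl (R : zmodType) (x : R) : pm x x.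
Proof. by left. Qed.

Lemma pm_sym (R : zmodType) (x y : R) : pm x y -> pm y x.
Proof. by case=> ->; [left|right; rewrite opprK]. Qed.

Lemma pm_trans (R : zmodType) (x y z : R) : pm x y -> pm y z -> pm x z.
Proof.
case=> -> [] ->; rewrite ?opprK; by [left|right].
Qed.

Lemma pm_opp (R : zmodType) (x y : R) : pm x y -> pm x (- y).
Proof. by case=> ->; [right|left]; rewrite ?opprK. Qed.

Lemma pm_sign (R : pzRingType) (m : nat) (x y : R) : pm x y -> pm ((-1) ^+ m * x) y.
Proof.
move=> h; elim: m => [|m IH]; first by rewrite expr0 mul1r.
by rewrite exprS -mulrA mulN1r; apply: pm_sym; apply: pm_opp; apply: pm_sym.
Qed.

Section Enum.
Variable n : nat.

Lemma perm_of_codom k (r r' : 'I_k -> 'I_n) :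
  injective r -> injective r' -> (forall x, (x \in codom r) = (x \in codom r')) ->
  exists s : 'S_k, forall a, r' a = r (s a).
Proof.
move=> ir ir' hc.
have hex a : exists b, r b == r' a.
  have : r' a \in codom r by rewrite hc codom_f.
  by case/codomP => b ->; exists b.
pose g a := xchoose (hex a).
have gP a : r (g a) = r' a by apply/eqP; exact: (xchooseP (hex a)).
have ig : injective g by move=> a b h; apply: ir'; rewrite -!gP h.
by exists (perm ig) => a; rewrite permE gP.
Qed.

Lemma card_codom_inj k (r : 'I_k -> 'I_n) : injective r -> #|codom r| = k.
Proof. by move=> ir; rewrite card_codom // card_ord. Qed.

Lemma det_pm (A : 'M[{mpoly int[n]}]_n) k k' (r c : 'I_k -> 'I_n) (r' c' : 'I_k' -> 'I_n) :
  injective r -> injective c -> injective r' -> injective c' ->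
  (forall x, (x \in codom r) = (x \in codom r')) ->
  (forall x, (x \in codom c) = (x \in codom c')) ->
  pm (\det (subm A r c)) (\det (subm A r' c')).
Proof.
move=> ir ic ir' ic' hr hc.
have ekk : k = k'.
  by rewrite -(card_codom_inj ir) -(card_codom_inj ir'); apply: eq_card.
subst k'.
have [s hs] := perm_of_codom ir ir' hr.
have [t ht] := perm_of_codom ic ic' hc.
have -> : subm A r' c' = row_perm s (col_perm t (subm A r c)).
  by apply/matrixP => a b; rewrite !mxE hs ht.
rewrite row_permE col_permE !det_mulmx !det_perm.
apply: pm_sym; apply: pm_sign; rewrite mulrC; apply: pm_sign; exact: pm_refl.
Qed.

End Enum.

Lemma det0_block (R : comNzRingType) k (B : 'M[R]_k) (S Cs : {set 'I_k}) :
  (#|Cs| < #|S|)%N -> (forall i j, i \in S -> j \notin Cs -> B i j = 0) ->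
  \det B = 0.
Proof.
move=> hcard hz; rewrite /determinant; apply: big1 => s _.
have [/existsP [i /andP [iS siC]]|] := boolP [exists i, (i \in S) && (s i \notin Cs)].
  by rewrite (bigD1 i) //= hz // mul0r mulr0.
move/existsPn => h.
have sub : s @: S \subset Cs.
  apply/subsetP => x /imsetP [i iS ->]; have := h i; rewrite iS /=.
  by rewrite negbK.
have := subset_leq_card sub; rewrite card_imset; last exact: perm_inj.
by rewrite leqNgt hcard.
Qed.

Definition ori (n : nat) (e : rel 'I_n) (D : {set 'I_n * 'I_n}) :=
 [/\ forall x y, (x,y) \in D -> x = y \/ e x y,
     forall x y, (x,y) \in D -> (y,x) \in D -> x = y,
     forall x y z, (x,y) \in D -> (x,z) \in D -> y = z &
     forall x y z, (x,z) \in D -> (y,z) \in D -> x = y].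

Definition loops (n : nat) (D : {set 'I_n * 'I_n}) := [set x | (x,x) \in D].

Section Graph.
Variables (n : nat) (e : rel 'I_n).
Hypothesis esym : forall u v : 'I_n, e u v = e v u.
Hypothesis acyc : forall s : seq 'I_n, uniq s -> (2 < size s)%N -> ~~ path.cycle e s.

Lemma start_exists (D : {set 'I_n * 'I_n}) x y : ori e D -> (x, y) \in D -> x != y ->
  exists u v, [/\ (u, v) \in D, u != v & u \notin heads D].
Proof.
move=> [oa ob oc od] xyD nxy.
case: (boolP [exists u, exists v, [&& (u,v) \in D, u != v & u \notin heads D]]).
  by move/existsP => [u /existsP [v /and3P [a b c]]]; exists u, v.
move=> H1; exfalso.
have H (u v : 'I_n) : (u,v) \in D -> u != v -> u \in heads D.
  move=> uvD nuv; apply/negPn/negP => nh; move/negP: H1; apply.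
  by apply/existsP; exists u; apply/existsP; exists v; rewrite uvD nuv nh.
pose S := [set z | [exists w, ((z,w) \in D) && (z != w)]].
have Sh z : z \in S -> exists w, [/\ (w, z) \in D, w != z & w \in S].
  rewrite inE => /existsP [w /andP [zwD nzw]].
  have := H _ _ zwD nzw; rewrite inE => /existsP [w' w'D].
  have nw' : w' != z.
    apply/eqP => ew; subst w'; have := oc _ _ _ w'D zwD; by move/eqP: nzw.
  exists w'; split => //; rewrite inE; apply/existsP; exists z; by rewrite w'D.
pose g z := if z \in S then odflt z [pick w | ((w, z) \in D) && (w != z) && (w \in S)] else z.
have gS z : z \in S -> [/\ (g z, z) \in D, g z != z & g z \in S].
  move=> zS; rewrite /g zS; case: pickP => [w /andP [/andP [a b] c] | h0] //=.
  have [w [a b c]] := Sh _ zS; have := h0 w; by rewrite a b c.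
have gN z : z \notin S -> g z = z by rewrite /g => /negbTE ->.
have ginj : injective g.
  move=> a b; case: (boolP (a \in S)) => aS; case: (boolP (b \in S)) => bS.
  - move=> hab; have [a1 _ _] := gS _ aS; have [b1 _ _] := gS _ bS.
    rewrite hab in a1; exact: oc _ _ _ a1 b1.
  - rewrite (gN _ bS) => hab; have [_ _ a3] := gS _ aS; by rewrite hab (negbTE bS) in a3.
  - rewrite (gN _ aS) => hab; have [_ _ b3] := gS _ bS; by rewrite -hab (negbTE aS) in b3.
  - by rewrite (gN _ aS) (gN _ bS).
have xS : x \in S by rewrite inE; apply/existsP; exists y; rewrite xyD.
have iterS m : iter m g x \in S.
  elim: m => [//|m IHm]; rewrite iterS; by have [_ _ ->] := gS _ IHm.
have allS : all (mem S) (orbit g x).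
  apply/allP => z /trajectP [i _ ->]; exact: iterS.
have cyc : path.cycle e (orbit g x).
  apply: (sub_in_cycle (P := mem S) (e := frel g)) => //; last exact: cycle_orbit.
  move=> a b aS bS /= /eqP <-; have [a1 a2 _] := gS _ aS.
  have [h|h] := oa _ _ a1; first by move/eqP: a2.
  by rewrite esym.
have [g1 g2 g3] := gS _ xS.
have [h1 h2 h3] := gS _ g3.
have sz : (2 < size (orbit g x))%N.
  have u3 : uniq [:: x; g x; g (g x)].
    rewrite /= !inE negb_or; apply/and3P; split.
    - apply/andP; split; first by rewrite eq_sym.
      apply/eqP => ex; move: h1; rewrite -ex => h1'.
      by have := ob _ _ g1 h1'; move/eqP: g2.
    - by rewrite eq_sym.
    - by [].
  have := uniq_leq_size u3; apply => z; rewrite !inE => /or3P [] /eqP ->.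
  - exact: in_orbit.
  - exact: mem_orbit.
  - by apply: mem_orbit; apply: mem_orbit.
by have := acyc (orbit_uniq g x) sz; rewrite cyc.
Qed.
End Graph.

Section Sep.
Variables (n : nat) (e : rel 'I_n).
Hypothesis esym : forall u v : 'I_n, e u v = e v u.
Hypothesis acyc : forall s : seq 'I_n, uniq s -> (2 < size s)%N -> ~~ path.cycle e s.

Lemma sep_set u x1 v : e x1 u -> e v u -> x1 != v -> x1 != u ->
  exists C : {set 'I_n},
    [/\ x1 \in C, u \notin C, v \notin C &
        forall w w', w \in C -> w' \notin C -> e w w' -> w' = u].
Proof.
move=> ex1u evu nx1v nx1u.
pose e' := [rel a b | [&& e a b, a != u & b != u]].
have allnu x p : x != u -> path e' x p -> all (fun w => w != u) (x :: p).
  elim: p x => [|y p IHp] x xu /=; first by rewrite xu.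
  move/andP => [/and3P [_ _ yu] pth]; rewrite xu /=; exact: IHp.
exists [set w | connect e' x1 w]; split.
- by rewrite inE connect0.
- rewrite inE; apply/negP => /connectP [p pth lu].
  have := allnu _ _ nx1u pth => /allP /(_ (last x1 p) (mem_last _ _)).
  by rewrite -lu eqxx.
- rewrite inE; apply/negP => /connectP [p pth lv].
  case/shortenP: pth lv => p' pth' up' _ lv.
  have hall := allnu _ _ nx1u pth'.
  have un : u \notin x1 :: p'.
    by apply/negP => /(allP hall) /=; rewrite eqxx.
  have pthe : path e x1 p'.
    by apply: sub_path pth' => a b /and3P [].
  have hp' : p' != [::] by apply/eqP => p0; move: lv; rewrite p0 /= => ev; move/eqP: nx1v; rewrite ev.
  have huniq : uniq (u :: x1 :: p') by rewrite cons_uniq un up'.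
  have hsz : (2 < size (u :: x1 :: p'))%N by case: p' hp' {pth' up' hall un pthe lv huniq}.
  move: (acyc huniq hsz) => /negP; apply.
  rewrite /path.cycle rcons_cons /= esym ex1u /= rcons_path pthe -lv evu.
  by [].
- move=> w w'; rewrite !inE => cw cw' eww'.
  apply/eqP; apply/negPn/negP => nw'u.
  have wu : w != u.
    apply/negP => /eqP wu; move: cw => /connectP [p pth lw].
    have := allnu _ _ nx1u pth => /allP /(_ (last x1 p) (mem_last _ _)).
    by rewrite -lw wu eqxx.
  move/negP: cw'; apply; apply: connect_trans cw _; apply: connect1.
  by rewrite /= eww' wu nw'u.
Qed.
End Sep.

Lemma codom_lift (n k : nat) (r : 'I_k.+1 -> 'I_n) i0 x : injective r ->
  (x \in codom (r \o lift i0)) = (x != r i0) && (x \in codom r).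
Proof.
move=> ir; apply/codomP/andP => [[a ->]|[nx /codomP [b xb]]].
  split; last exact: codom_f.
  by apply/eqP => /ir h; move: (neq_lift i0 a); rewrite h eqxx.
have nb : i0 != b by apply/eqP => h; move: nx; rewrite xb h eqxx.
have [a ha _] := unlift_some nb; exists a => /=; by rewrite xb -ha.
Qed.

Lemma card_pre (n k : nat) (g : 'I_k -> 'I_n) (P : {set 'I_n}) : injective g ->
  #|[set a | g a \in P]| = #|[set x in P | x \in codom g]|.
Proof.
move=> ig; rewrite -(card_imset _ ig); apply: eq_card => x.
apply/imsetP/idP => [[a] | ]; rewrite !inE.
  by move=> ha ->; rewrite ha codom_f.
by move=> /andP [xP /codomP [a xa]]; exists a; rewrite // inE -xa.
Qed.

Lemma card_codom_set (n k : nat) (g : 'I_k -> 'I_n) (P : {set 'I_n}) : injective g ->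
  (forall x, (x \in codom g) = (x \in P)) -> #|P| = k.
Proof.
move=> ig h; rewrite -(card_codom_inj ig); apply: eq_card => x; by rewrite h.
Qed.

Section Step.
Variables (n : nat) (e : rel 'I_n).
Hypothesis esym : forall u v : 'I_n, e u v = e v u.
Hypothesis acyc : forall s : seq 'I_n, uniq s -> (2 < size s)%N -> ~~ path.cycle e s.

Lemma arc_count (D : {set 'I_n * 'I_n}) (C : {set 'I_n}) :
  ori e D -> (forall x y, (x, y) \in D -> (x \in C) = (y \in C)) ->
  #|C :&: heads D| = #|C :&: tails D|.
Proof.
move=> [oa ob oc od] hcl.
pose A := [set p in D | p.2 \in C].
have h1 : C :&: heads D = (@snd _ _) @: A.
  apply/setP => y; rewrite !inE; apply/andP/imsetP => [[yC /existsP [x xy]]|[[x y'] ]].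
    by exists (x, y); rewrite // !inE xy.
  by rewrite !inE /= => /andP [xy yC] ->; split => //; apply/existsP; exists x.
have h2 : C :&: tails D = (@fst _ _) @: A.
  apply/setP => x; rewrite !inE; apply/andP/imsetP => [[xC /existsP [y xy]]|[[x' y] ]].
    by exists (x, y); rewrite // !inE xy /= -(hcl _ _ xy).
  rewrite !inE /= => /andP [xy yC] ->; split; first by rewrite (hcl _ _ xy).
  by apply/existsP; exists y.
rewrite h1 h2 !card_in_imset //.
  move=> [a b] [a' b']; rewrite !inE /= => /andP [ab _] /andP [ab' _] ea.
  by subst a'; rewrite (oc _ _ _ ab ab').
move=> [a b] [a' b']; rewrite !inE /= => /andP [ab _] /andP [ab' _] eb.
by subst b'; rewrite (od _ _ _ ab ab').
Qed.

Lemma step (D : {set 'I_n * 'I_n}) u v k (r c : 'I_k.+1 -> 'I_n) :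
  ori e D -> (u, v) \in D -> u != v -> u \notin heads D ->
  injective r -> injective c ->
  (forall x, (x \in codom r) = (x \in heads D)) ->
  (forall x, (x \in codom c) = (x \in tails D)) ->
  exists i0 j0, [/\ r i0 = v, c j0 = u &
    pm (\det (subm (Lmx e) r c)) (\det (subm (Lmx e) (r \o lift i0) (c \o lift j0)))].
Proof.
move=> [oa ob oc od] uvD nuv nuh ir ic hr hc.
have vh : v \in heads D by rewrite inE; apply/existsP; exists u.
have ut : u \in tails D by rewrite inE; apply/existsP; exists v.
have evu : e v u.
  by have [h|h] := oa _ _ uvD; [move/eqP: nuv | rewrite esym].
move: (vh) (ut); rewrite -hr -hc => /codomP [i0 ri0] /codomP [j0 cj0].
exists i0, j0; split => //.
set A := subm (Lmx e) r c.
have hB : row' i0 (col' j0 A) = subm (Lmx e) (r \o lift i0) (c \o lift j0).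
  by apply/matrixP => a b; rewrite !mxE.
rewrite (expand_det_col _ j0) (bigD1 i0) //= big1 ?addr0.
  rewrite /cofactor hB /A !mxE -ri0 -cj0.
  have -> : (v == u) = false by apply/negbTE; rewrite eq_sym.
  rewrite evu mulN1r; apply: pm_sym; apply: pm_opp; apply: pm_sym; apply: pm_sign; exact: pm_refl.
move=> i ni0; rewrite /A mxE.
have hri : r i \in heads D by rewrite -hr codom_f.
have riu : (r i == c j0) = false.
  by apply/negbTE; apply/eqP => h; move: hri; rewrite h -cj0 (negbTE nuh).
rewrite /Lmx mxE riu; case: ifP => eiu; last by rewrite mul0r.
rewrite /cofactor; apply/eqP; rewrite mulN1r oppr_eq0 mulf_eq0; apply/orP; right.
apply/eqP; rewrite -cj0 in eiu.
have nx1v : r i != v by rewrite ri0; apply/eqP => /ir h; move/eqP: ni0; rewrite h.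
have nx1u : r i != u by apply/eqP => h; move: hri; rewrite h (negbTE nuh).
have [C [x1C uC vC Csep]] := sep_set esym acyc eiu evu nx1v nx1u.
have hcl x y : (x, y) \in D -> (x \in C) = (y \in C).
  move=> xy; have [exy|exy] := oa _ _ xy; first by rewrite exy.
  case xC: (x \in C); case yC: (y \in C) => //.
  - have yu := Csep _ _ xC (negbT yC) exy.
    by move: nuh; rewrite -yu inE; move/existsP; case; exists x.
  - rewrite esym in exy; have xu := Csep _ _ yC (negbT xC) exy.
    subst x; have yv := oc _ _ _ xy uvD; by move: vC; rewrite -yv yC.
have hm := arc_count (And4 oa ob oc od) hcl.
set m := #|C :&: heads D| in hm.
have hk : #|heads D| = k.+1 by rewrite -(card_codom_set ir hr).
have m1 : (1 <= m)%N by apply/card_gt0P; exists (r i); rewrite inE x1C hri.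
have mk : (m <= k)%N.
  have : (m < #|heads D|)%N.
    apply: proper_card; apply/properP; split; first exact: subsetIr.
    by exists v => //; rewrite inE (negbTE vC).
  by rewrite hk.
pose SC := [set a | (r \o lift i) a \in C].
pose CC := [set b | (c \o lift j0) b \in C].
have cSC : #|SC| = m.-1.
  rewrite /SC card_pre; last by apply: inj_comp => //; exact: lift_inj.
  rewrite /m (cardsD1 (r i) (C :&: heads D)) inE x1C hri /=. rewrite add0n.
  apply: eq_card => x; rewrite !inE codom_lift // hr.
  by rewrite [x \in heads D]inE andbCA.
have cCC : #|CC| = m.
  rewrite /CC card_pre; last by apply: inj_comp => //; exact: lift_inj.
  rewrite hm; apply: eq_card => x; rewrite !inE codom_lift // hc -cj0.
  case xC: (x \in C) => //=; have -> : x != u; last by rewrite inE.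
  by apply/eqP => xu; move: uC; rewrite -xu xC.
apply: (det0_block (S := ~: SC) (Cs := ~: CC)).
  have := cardsC SC; have := cardsC CC; rewrite !card_ord cSC cCC.
  move: (#|~: SC|) (#|~: CC|) m1 mk => a b m1' mk'.
  clear -m1' mk'; move: m m1' mk' => mm; case: mm => // mm _ /= mk1 h2 h1.
  lia.
move=> a b; rewrite !inE negbK /= => aS bC; rewrite !mxE.
have ne : (r (lift i a) == c (lift j0 b)) = false.
  by apply/negbTE; apply/eqP => h; move: aS; rewrite h bC.
rewrite ne; case: ifP => // he.
rewrite esym in he; have := Csep _ _ bC aS he => hu.
have : r (lift i a) \in heads D by rewrite -hr codom_f.
by rewrite hu (negbTE nuh).
Qed.
End Step.

Lemma ori_sub (n : nat) (e : rel 'I_n) (D D' : {set 'I_n * 'I_n}) :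
  ori e D -> D' \subset D -> ori e D'.
Proof.
move=> [oa ob oc od] /subsetP s; split.
- by move=> x y /s; apply: oa.
- by move=> x y /s h1 /s h2; apply: ob.
- by move=> x y z /s h1 /s h2; apply: oc h1 h2.
- by move=> x y z /s h1 /s h2; apply: od h1 h2.
Qed.

Section Main.
Variables (n : nat) (e : rel 'I_n).
Hypothesis esym : forall u v : 'I_n, e u v = e v u.
Hypothesis acyc : forall s : seq 'I_n, uniq s -> (2 < size s)%N -> ~~ path.cycle e s.

Lemma main_red (D : {set 'I_n * 'I_n}) : ori e D ->
  forall k (r c : 'I_k -> 'I_n) k' (r' c' : 'I_k' -> 'I_n),
  injective r -> injective c -> injective r' -> injective c' ->
  (forall x, (x \in codom r) = (x \in heads D)) ->
  (forall x, (x \in codom c) = (x \in tails D)) ->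
  (forall x, (x \in codom r') = (x \in loops D)) ->
  (forall x, (x \in codom c') = (x \in loops D)) ->
  pm (\det (subm (Lmx e) r c)) (\det (subm (Lmx e) r' c')).
Proof.
have [N] := ubnP #|D|; elim: N D => // N IH D hN hori k r c k' r' c' ir ic ir' ic' hr hc hr' hc'.
case: (boolP [exists p in D, p.1 != p.2]) => [/existsP [[x y] /andP [xyD /= nxy]] | hall].
  have [u [v [uvD nuv nuh]]] := start_exists esym acyc hori xyD nxy.
  have [oa ob oc od] := hori.
  have vh : v \in heads D by rewrite inE; apply/existsP; exists u.
  case: k r c ir ic hr hc => [|k0] r c ir ic hr hc.
    by move: vh; rewrite -hr => /codomP [[]].
  have [i0 [j0 [ri0 cj0 hpm]]] := step esym acyc hori uvD nuv nuh ir ic hr hc.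
  pose D' := D :\ (u, v).
  have ori' : ori e D' by apply: ori_sub hori _; exact: subsetDl.
  have hN' : (#|D'| < N)%N.
    by rewrite /D' (cardsD1 (u, v) D) uvD in hN.
  apply: pm_trans hpm _.
  apply: (IH D' hN' ori') => //.
  - by apply: inj_comp => //; exact: lift_inj.
  - by apply: inj_comp => //; exact: lift_inj.
  - move=> z; rewrite codom_lift // hr ri0 !inE.
    apply/andP/existsP => [[nzv /existsP [w wz]]|[w]].
      by exists w; rewrite !inE wz andbT; apply/eqP => [[_ zv]]; move/eqP: nzv.
    rewrite !inE => /andP [nw wz]; split; last by apply/existsP; exists w.
    apply/eqP => zv; subst z; have wu := od _ _ _ wz uvD; by move: nw; rewrite wu eqxx.
  - move=> z; rewrite codom_lift // hc cj0 !inE.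
    apply/andP/existsP => [[nzu /existsP [w zw]]|[w]].
      by exists w; rewrite !inE zw andbT; apply/eqP => [[zu _]]; move/eqP: nzu.
    rewrite !inE => /andP [nw zw]; split; last by apply/existsP; exists w.
    apply/eqP => zu; subst z; have wv := oc _ _ _ zw uvD; by move: nw; rewrite wv eqxx.
  - move=> z; rewrite hr' !inE; case zz: ((z, z) \in D); rewrite ?andbF ?andbT //.
    by symmetry; apply/negP => /eqP [zu zv]; move/eqP: nuv; rewrite -zu -zv.
  - move=> z; rewrite hc' !inE; case zz: ((z, z) \in D); rewrite ?andbF ?andbT //.
    by symmetry; apply/negP => /eqP [zu zv]; move/eqP: nuv; rewrite -zu -zv.
have loopD p : p \in D -> p.1 = p.2.
  move=> pD; apply/eqP; apply/negPn/negP => np; move/existsP: hall; apply.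
  by exists p; rewrite pD np.
apply: det_pm => // z.
- rewrite hr hr' !inE; apply/existsP/idP => [[w wz]|zz]; last by exists z.
  by have /= e1 := loopD _ wz; rewrite e1 in wz.
- rewrite hc hc' !inE; apply/existsP/idP => [[w wz]|zz]; last by exists z.
  by have /= e1 := loopD _ wz; rewrite -e1 in wz.
Qed.
End Main.


Lemma incr_inj (n k : nat) (r : 'I_k -> 'I_n) : increasing r -> injective r.
Proof.
move=> hr a b hab; apply/eqP; case: (ltngtP a b) => // h.
- by have := hr _ _ h; rewrite hab ltnn.
- by have := hr _ _ h; rewrite hab ltnn.
- by apply/eqP; apply: val_inj.
Qed.

Lemma enum_incr (n : nat) (A : {set 'I_n}) :
  exists k (r : 'I_k -> 'I_n),
    [/\ increasing r, injective r & forall x, (x \in codom r) = (x \in A)].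
Proof.
have hs : sorted (relpre (@nat_of_ord n) ltn) (enum A).
  rewrite /enum_mem -enumT; apply: sorted_filter.
    by move=> a b c /= h1 h2; apply: ltn_trans h1 h2.
  by rewrite -sorted_map val_enum_ord iota_ltn_sorted.
have inc : increasing (@enum_val _ (mem A)).
  move=> a b ab; case: n A hs a b ab => [|n] A hs a b ab.
    by case: (enum_val a).
  rewrite !(enum_val_nth ord0).
  have hs' : sorted ltn (map val (enum A)) by rewrite sorted_map.
  have sz : size (enum A) = #|A| by rewrite cardE.
  have ha : (a < size (enum A))%N by rewrite sz.
  have hb : (b < size (enum A))%N by rewrite sz.
  rewrite -!(nth_map ord0 0%N) //.
  by apply: (sorted_ltn_nth ltn_trans 0%N hs') => //; rewrite inE size_map.
exists #|A|, (@enum_val _ (mem A)); split => //; first exact: enum_val_inj.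
move=> x; apply/codomP/idP => [[i ->]|xA]; first exact: enum_valP.
by exists (enum_rank_in xA x); rewrite enum_rankK_in.
Qed.


Lemma set2_eq (T : finType) (x y a b : T) : [set x; y] = [set a; b] ->
  (x = a /\ y = b) \/ (x = b /\ y = a).
Proof.
move=> h.
have xab : x \in [set a; b] by rewrite -h set21.
have yab : y \in [set a; b] by rewrite -h set22.
have axy : a \in [set x; y] by rewrite h set21.
have bxy : b \in [set x; y] by rewrite h set22.
case/set2P: xab => hx; case/set2P: yab => hy; subst;
  try by [left; split | right; split].
- by move: bxy => /set2P [] ->; left.
- by move: axy => /set2P [] ->; left.
Qed.

Lemma le1_eq (T : finType) (P : {set T}) x y : (#|P| <= 1)%N -> x \in P -> y \in P -> x = y.
Proof. by move=> /card_le1_eqP h px py; symmetry; apply: h. Qed.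

Section Orient.
Variables (n : nat) (e : rel 'I_n).
Hypothesis esym : forall u v : 'I_n, e u v = e v u.

Definition Mof (D : {set 'I_n * 'I_n}) : {set {set 'I_n}} :=
  [set [set p.1; p.2] | p in D].

Lemma Mof_two (D : {set 'I_n * 'I_n}) : ori e D -> two_matching e (Mof D).
Proof.
move=> [oa ob oc od]; split.
  move=> E /imsetP [[x y] xy ->] /=.
  case: (oa _ _ xy) => [<-|exy]; first by left; exists x; rewrite setUid.
  by right; exists x, y.
move=> w.
case hl: ([set w] \in Mof D).
  move: hl => /imsetP [[x y] xy /= h].
  have : x \in [set w] by rewrite h set21.
  have : y \in [set w] by rewrite h set22.
  rewrite !inE => /eqP yw /eqP xw; subst x y.
  suff -> : [set E in Mof D | (w \in E) && (#|E| == 2)] = set0 by rewrite cards0.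
  apply/setP => E; rewrite !inE; apply/negP => /andP [/imsetP [[a b] ab ->] /=].
  rewrite cards2 eqSS eqb1 => /andP [/set2P hw nab].
  case: hw => hw; subst.
  - by have := oc _ _ _ xy ab => hb; move: nab; rewrite hb eqxx.
  - by have := od _ _ _ ab xy => ha; move: nab; rewrite ha eqxx.
rewrite muln0 addn0.
pose Out := [set y | (w, y) \in D].
pose In := [set x | (x, w) \in D].
have cO : (#|Out| <= 1)%N by apply/card_le1_eqP => a b; rewrite !inE => h1 h2; apply: oc h2 h1.
have cI : (#|In| <= 1)%N by apply/card_le1_eqP => a b; rewrite !inE => h1 h2; apply: od h2 h1.
have sub : [set E in Mof D | (w \in E) && (#|E| == 2)] \subset
   ((fun y => [set w; y]) @: Out) :|: ((fun x => [set x; w]) @: In).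
  apply/subsetP => E; rewrite !inE => /andP [/imsetP [[a b] ab ->] /= /andP [/set2P hw _]].
  case: hw => hw; subst; apply/orP; [left|right]; apply/imsetP.
  - by exists b; rewrite // inE.
  - by exists a; rewrite // inE.
apply: leq_trans (subset_leq_card sub) _.
apply: leq_trans (leq_card_setU _ _) _.
have := leq_imset_card (fun y => [set w; y]) Out.
have := leq_imset_card (fun x => [set x; w]) In.
move: (#|_ @: Out|) (#|_ @: In|) => p q hq hp.
by rewrite -[2%N]/(1 + 1)%N; apply: leq_add; [apply: leq_trans hp cO | apply: leq_trans hq cI].
Qed.

Lemma Mof_orient (D : {set 'I_n * 'I_n}) : ori e D -> is_orientation (Mof D) D.
Proof.
move=> [oa ob oc od]; split.
- by move=> u v uv; apply/imsetP; exists (u, v).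
- by move=> E /imsetP [[u v] uv ->]; exists u, v.
- exact: ob.
- by move=> u; apply/card_le1_eqP => a b; rewrite !inE => h1 h2; apply: oc h2 h1.
- by move=> v; apply/card_le1_eqP => a b; rewrite !inE => h1 h2; apply: od h2 h1.
Qed.

Lemma orient_ori (D1 D : {set 'I_n * 'I_n}) : ori e D1 ->
  is_orientation (Mof D1) D -> ori e D.
Proof.
move=> [oa ob oc od] [pa pb pc pd pe]; split => //.
- move=> x y xy; have := pa _ _ xy => /imsetP [[a b] ab /= h].
  case: (set2_eq h) => [[-> ->]|[-> ->]]; first exact: oa.
  by case: (oa _ _ ab) => [->|h']; [left|right; rewrite esym].
- by move=> x y z h1 h2; apply: (le1_eq (pd x)); rewrite !inE.
- by move=> x y z h1 h2; apply: (le1_eq (pe z)); rewrite !inE.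
Qed.

Lemma loops_sub (M : {set {set 'I_n}}) (D D' : {set 'I_n * 'I_n}) x :
  is_orientation M D -> is_orientation M D' -> (x, x) \in D -> (x, x) \in D'.
Proof.
move=> [pa _ _ _ _] [_ qb _ _ _] xx.
have [a [b [ab h]]] := qb _ (pa _ _ xx).
by case: (set2_eq h) => [[ha hb]|[ha hb]]; subst.
Qed.

End Orient.

Lemma fix_ori (n : nat) (e : rel 'I_n) (D0 : {set 'I_n * 'I_n}) :
  (forall x y, (x,y) \in D0 -> x = y \/ e x y) ->
  (forall x y z, (x,y) \in D0 -> (x,z) \in D0 -> y = z) ->
  (forall x y z, (x,z) \in D0 -> (y,z) \in D0 -> x = y) ->
  exists D1, [/\ ori e D1, (forall x, (x \in heads D1) = (x \in heads D0)) &
                 (forall x, (x \in tails D1) = (x \in tails D0))].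
Proof.
move=> oa oc od.
pose A := [set p in D0 | (p.2, p.1) \notin D0].
pose B := [set p in D0 | (p.2, p.1) \in D0].
pose D1 := A :|: [set (p.1, p.1) | p in B].
have mD1 x y : (x, y) \in D1 ->
   ((x, y) \in D0 /\ (y, x) \notin D0) \/ (x = y /\ exists z, (x, z) \in D0 /\ (z, x) \in D0).
  rewrite !inE => /orP [/andP [h1 h2]|/imsetP [[a b]]]; first by left.
  rewrite !inE /= => /andP [h1 h2] [-> ->]; right; split => //; by exists b.
exists D1; split.
- split.
  + move=> x y /mD1 [[h _]|[-> _]]; [exact: oa | by left].
  + move=> x y /mD1 [[h1 h2]|[-> _] //] /mD1 [[h3 h4]|[-> _] //].
    by move: h2; rewrite h3.
  + move=> x y z /mD1 [[h1 h2]|[<- [w [h3 h4]]]] /mD1 [[h5 h6]|[<- [w' [h7 h8]]]] //.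
    * by apply: oc h1 h5.
    * by have := oc _ _ _ h1 h7 => yw; move: h2; rewrite yw h8.
    * by have := oc _ _ _ h3 h5 => wz; move: h6; rewrite -wz h4.
  + move=> x y z /mD1 [[h1 h2]|[-> [w [h3 h4]]]] /mD1 [[h5 h6]|[-> [w' [h7 h8]]]] //.
    * by apply: od h1 h5.
    * by have := od _ _ _ h1 h8 => xw; move: h2; rewrite xw h7.
    * by have := od _ _ _ h4 h5 => wy; move: h6; rewrite -wy h3.
- move=> x; rewrite !inE; apply/existsP/existsP => [[w /mD1 [[h _]|[-> [z [h1 h2]]]]]|[w wx]].
  + by exists w.
  + by exists z.
  case: (boolP ((x, w) \in D0)) => xw.
    exists x; rewrite !inE; apply/orP; right; apply/imsetP; exists (x, w) => //.
    by rewrite !inE xw.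
  by exists w; rewrite !inE wx xw.
- move=> x; rewrite !inE; apply/existsP/existsP => [[w /mD1 [[h _]|[_ [z [h1 h2]]]]]|[w xw]].
  + by exists w.
  + by exists z.
  case: (boolP ((w, x) \in D0)) => wx.
    exists x; rewrite !inE; apply/orP; right; apply/imsetP; exists (x, w) => //.
    by rewrite !inE xw.
  by exists w; rewrite !inE xw wx.
Qed.


Lemma sigma_ex (R : comNzRingType) k (A : 'M[R]_k) : \det A != 0 ->
  exists s : 'S_k, forall i, A i (s i) != 0.
Proof.
move=> hd; case: (boolP [exists s : 'S_k, [forall i, A i (s i) != 0]]).
  by move=> /existsP [s /forallP h]; exists s.
move=> /existsPn hn; move: hd; rewrite /determinant big1 ?eqxx //.
move=> s _; have := hn s => /forallPn [i]; rewrite negbK => /eqP hi.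
by rewrite (bigD1 i) //= hi mul0r mulr0.
Qed.

Theorem lemma3p3 (n : nat) (e : rel 'I_n) (f : {mpoly int[n]}) :
  is_tree e -> is_minor e f -> f != 0 -> 0 < mleadc f ->
  exists M : {set {set 'I_n}},
    two_matching e M /\
    (exists D, is_orientation M D) /\
    (forall D, is_orientation M D -> is_d e D f).
Proof.
move=> hT hm fnz lead; case: hT => esym irr _ acyc.
case: hm => k [r [c [k0 incr incc fdef]]].
have ir := incr_inj incr; have ic := incr_inj incc.
have [s hs] : exists s : 'S_k, forall i, subm (Lmx e) r c i (s i) != 0.
  by apply: sigma_ex; rewrite -fdef.
have hs' i : r i = c (s i) \/ e (r i) (c (s i)).
  have := hs i; rewrite !mxE.
  case: (r i =P c (s i)) => [h|_]; first by left.
  by case: (e (r i) (c (s i))) => //; [right | rewrite eqxx].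
pose D0 := [set (c (s i), r i) | i : 'I_k].
have mD0 x y : (x, y) \in D0 -> exists i, x = c (s i) /\ y = r i.
  by move=> /imsetP [i _ [-> ->]]; exists i.
have [D1 [o1 h1 t1]] : exists D1, [/\ ori e D1, (forall x, (x \in heads D1) = (x \in heads D0)) &
                 (forall x, (x \in tails D1) = (x \in tails D0))].
  apply: fix_ori.
  - move=> x y /mD0 [i [-> ->]]; case: (hs' i) => h; [by left | by right; rewrite esym].
  - move=> x y z /mD0 [i [-> ->]] /mD0 [j [ej ->]].
    by move/ic/perm_inj: ej => ->.
  - move=> x y z /mD0 [i [-> ej]] /mD0 [j [-> ej']].
    by rewrite ej' in ej; move/ir: ej => ->.
have hD0 x : (x \in heads D0) = (x \in codom r).
  rewrite inE; apply/existsP/codomP => [[w /mD0 [i [_ ->]]]|[i ->]]; first by exists i.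
  by exists (c (s i)); apply/imsetP; exists i.
have tD0 x : (x \in tails D0) = (x \in codom c).
  rewrite inE; apply/existsP/codomP => [[w /mD0 [i [-> _]]]|[j ->]]; first by exists (s i).
  exists (r ((s^-1)%g j)); apply/imsetP; exists ((s^-1)%g j) => //.
  by rewrite permKV.
exists (Mof D1); split; first exact: Mof_two.
split; first by exists D1; exact: (Mof_orient o1).
move=> D oD.
have oriD := orient_ori esym o1 oD.
have o1' := Mof_orient o1.
have [kh [rh [ih irh hh]]] := enum_incr (heads D).
have [kt [ct [it ict ht]]] := enum_incr (tails D).
have [kl [rl [_ irl hl]]] := enum_incr (loops D).
have ekk : kh = kt.
  rewrite -(card_codom_set irh hh) -(card_codom_set ict ht).
  have h := arc_count (C := setT) oriD (fun x y _ => etrans (in_setT x) (Logic.eq_sym (in_setT y))).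
  by rewrite !setTI in h; apply: h.
subst kt.
have hl1 x : (x \in codom rl) = (x \in loops D1).
  rewrite hl !inE; apply/idP/idP; [exact: loops_sub oD o1' | exact: loops_sub o1' oD].
have e1 x : (x \in codom r) = (x \in heads D1) by rewrite h1 hD0.
have e2 x : (x \in codom c) = (x \in tails D1) by rewrite t1 tD0.
have e3 x : (x \in codom rh) = (x \in heads D) by rewrite hh.
have e4 x : (x \in codom ct) = (x \in tails D) by rewrite ht.
have p1 := main_red esym acyc o1 ir ic irl irl e1 e2 hl1 hl1.
have p2 := main_red esym acyc oriD irh ict irl irl e3 e4 hl hl.
exists kh, rh, ct; split => //; try by move=> u; rewrite ?hh ?ht.
split => //.
rewrite fdef; exact: pm_trans p1 (pm_sym p2).
Qed.
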